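(* Consider $K$ devices with local datasets $\mathcal D_1,\dots,\mathcal D_K$, $\mathcal D=\bigcup_k\mathcal D_k$, $|\mathcal D|=\sum_k|\mathcal D_k|$, and in round $t$ dropout rates $\gamma_{k,t}\in[0,1)$ and regularization coefficient $\lambda_t>0$. Suppose that for every device $k$ the hypotheses below hold. For each $k$ let $j_k$ be drawn uniformly from the indices of $\mathcal D_k$, let $\mathcal D^{\{j\}}$ denote the collection of datasets $\mathcal D_k^{j_k}=\mathcal D_k\setminus\{\boldsymbol x_{j_k}\}$, and let $\boldsymbol x_{\{j\}}=(\boldsymbol x_{j_1},\dots,\boldsymbol x_{j_K})$. Then $$\mathbb E_{\mathcal D,\{j\}}\Big|\mathcal L'_{\{\nu_{k,t}\}}\big(\boldsymbol\theta_{\mathcal L'}(\mathcal D^{\{j\}}),\boldsymbol x_{\{j\}}\big)-\mathcal L'_{\{\nu_{k,t}\}}\big(\boldsymbol\theta_{\mathcal L'}(\mathcal D),\boldsymbol x_{\{j\}}\big)\Big|\le\sum_{k=1}^K\frac{2\eta^2}{\big(\Lambda_{k,t,\min}+2\lambda_t(2\gamma_{k,t}-\gamma_{k,t}^2)\big)|\mathcal D|}.$$ Hypotheses, for each $k$ (with $\hat{\boldsymbol\theta}_k=\boldsymbol\theta_{\ell_{k,\lambda_t}}(\mathcal D_k)$, $\hat{\boldsymbol\theta}_k^{j}=\boldsymbol\theta_{\ell_{k,\lambda_t}}(\mathcal D_k^{j})$): (i) $\theta\mapsto\ell_{k,\lambda_t}(\theta,\boldsymbol x)$ is $\eta$-Lipschitz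 for every $\boldsymbol x$; (ii) $\hat{\boldsymbol\theta}_k^{j}$ is close to $\hat{\boldsymbol\theta}_k$ in the sense that the second-order Taylor expansion of $\ell_{k,\lambda_t}(\cdot;\mathcal D_k)$ about $\hat{\boldsymbol\theta}_k$ is exact at $\hat{\boldsymbol\theta}_k^{j}$; (iii) $\nabla^2\ell_{k,\lambda_t}(\hat{\boldsymbol\theta}_k;\mathcal D_k)$ is positive semidefinite and $\Lambda_{k,t,\min}$ is the smallest eigenvalue of the Hessian of the unregularized empirical loss $\ell_k$ at $\hat{\boldsymbol\theta}_k$.
   Context: Pre-trained parameters $\boldsymbol\theta_0$; per-sample loss $\ell(\boldsymbol\theta,\boldsymbol x)$; datasets consist of i.i.d. samples. Regularized per-sample loss of device $k$: $\ell_{k,\lambda_t}(\boldsymbol\theta,\boldsymbol x)=\ell(\boldsymbol\theta,\boldsymbol x)+\lambda_t\,\mathbb E_{\boldsymbol d}\|\boldsymbol d\odot(\boldsymbol\theta-\boldsymbol\theta_0)\|_2^2=\ell(\boldsymbol\theta,\boldsymbol x)+\lambda_t(2\gamma_{k,t}-\gamma_{k,t}^2)\|\boldsymbol\theta-\boldsymbol\theta_0\|_2^2$, where $\boldsymbol d$ has i.i.d. Bernoulli$(2\gamma_{k,t}-\gamma_{k,t}^2)$ entries; regularized empirical loss $\ell_{k,\lambda_t}(\boldsymbol\theta;S)$ is the average of $\ell$ over $S$ plus the same penalty, and $\boldsymbol\theta_{\ell_{k,\lambda_t}}(S)$ is its minimizer. The global regularized objective is $\mathcal L'_{\{\nu_{k,t}\}}=\sum_{k}\frac{|\mathcal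 D_k|}{|\mathcal D|}\min_{\boldsymbol\theta_k}\ell_{k,\lambda_t}(\boldsymbol\theta_k;\mathcal D_k)$, so its minimizer $\boldsymbol\theta_{\mathcal L'}(\mathcal D)$ is the tuple of per-device minimizers $(\hat{\boldsymbol\theta}_k)_k$ (and $\boldsymbol\theta_{\mathcal L'}(\mathcal D^{\{j\}})=(\hat{\boldsymbol\theta}_k^{j_k})_k$); its per-sample value at $(\boldsymbol\theta_k)_k$ on $\boldsymbol x_{\{j\}}$ is $\sum_k\frac{|\mathcal D_k|}{|\mathcal D|}\ell_{k,\lambda_t}(\boldsymbol\theta_k,\boldsymbol x_{j_k})$. *)

(* Defs.v *)
From HB Require Import structures.
From mathcomp Require Import all_boot all_order all_algebra.
From mathcomp Require Import all_classical all_reals all_analysis.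
Set Implicit Arguments.
Unset Strict Implicit.
Unset Printing Implicit Defensive.
Import Order.TTheory GRing.Theory Num.Theory.
Import numFieldNormedType.Exports.
Local Open Scope ring_scope.

Section FLDefs.
Variables (R : realType) (p : nat).

Definition sqnorm2 (v : 'rV[R]_p) : R := \sum_(i < p) v 0 i ^+ 2.
Definition norm2 (v : 'rV[R]_p) : R := Num.sqrt (sqnorm2 v).
Definition dotp (u v : 'rV[R]_p) : R := \sum_(i < p) u 0 i * v 0 i.
Definition unitvec (i : 'I_p) : 'rV[R]_p := delta_mx 0 i.

Definition partial (i : 'I_p) (f : 'rV[R]_p -> R) (th : 'rV[R]_p) : R :=
  'D_(unitvec i) f th.
Definition gradient (f : 'rV[R]_p -> R) (th : 'rV[R]_p) : 'rV[R]_p :=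
  \row_i partial i f th.
Definition hessian (f : 'rV[R]_p -> R) (th : 'rV[R]_p) : 'M[R]_p :=
  \matrix_(i, j) partial i (partial j f) th.

Definition quadform (H : 'M[R]_p) (v : 'rV[R]_p) : R := (v *m H *m v^T) 0 0.
Definition psd (H : 'M[R]_p) : Prop := forall v, 0 <= quadform H v.
Definition min_eigenvalue (H : 'M[R]_p) (a : R) : Prop :=
  eigenvalue H a /\ forall b, eigenvalue H b -> a <= b.

Definition is_minimizer (L : 'rV[R]_p -> R) (th : 'rV[R]_p) : Prop :=
  forall th', L th <= L th'.

Variable X : Type.

(* keep probability 2 gamma - gamma^2 of the Bernoulli mask *)
Definition keep_prob (g : R) : R := 2 * g - g ^+ 2.

Definition reg_loss (l : 'rV[R]_p -> X -> R) (th0 : 'rV[R]_p) (lam g : R)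
  (th : 'rV[R]_p) (x : X) : R :=
  l th x + lam * keep_prob g * sqnorm2 (th - th0).

Definition emp_loss (l : 'rV[R]_p -> X -> R) (S : seq X) (th : 'rV[R]_p) : R :=
  (size S)%:R^-1 * \sum_(x <- S) l th x.

Definition reg_emp_loss (l : 'rV[R]_p -> X -> R) (th0 : 'rV[R]_p) (lam g : R)
  (S : seq X) (th : 'rV[R]_p) : R :=
  emp_loss l S th + lam * keep_prob g * sqnorm2 (th - th0).

Definition dataset (n : nat) (D : 'I_n -> X) : seq X := [seq D i | i <- enum 'I_n].
Definition dataset_minus (n : nat) (D : 'I_n -> X) (j : 'I_n) : seq X :=
  [seq D i | i <- enum 'I_n & i != j].

Variable K : nat.

Definition total_size (n : 'I_K -> nat) : R := \sum_(k < K) (n k)%:R.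

Definition Lprime (n : 'I_K -> nat) (lk : 'I_K -> 'rV[R]_p -> X -> R)
  (ths : 'I_K -> 'rV[R]_p) (xs : 'I_K -> X) : R :=
  \sum_(k < K) ((n k)%:R / total_size n) * lk k (ths k) (xs k).

(* expectation over independent uniform indices j_k in 'I_(n k) *)
Definition unif_expect (n : 'I_K -> nat)
  (F : {dffun forall k : 'I_K, 'I_(n k)} -> R) : R :=
  (\prod_(k < K) (n k)%:R)^-1 * \sum_(j : {dffun forall k : 'I_K, 'I_(n k)}) F j.

End FLDefs.

Arguments unif_expect {R K} n F.
Arguments Lprime {R p X K} n lk ths xs.
Arguments total_size {R K} n.

(* Main.v *)
Require Import Defs.
From HB Require Import structures.
From mathcomp Require Import all_boot all_order all_algebra.
From mathcomp Require Import all_classical all_reals all_analysis.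
From mathcomp Require Import ring lra.
Import Order.TTheory GRing.Theory Num.Theory.
Import numFieldNormedType.Exports.
Local Open Scope classical_set_scope.
Local Open Scope ring_scope.
Set Implicit Arguments.
Unset Strict Implicit.
Unset Printing Implicit Defensive.
Section Alg.
Variables (R : realType) (p : nat).
Implicit Types (u v w d : 'rV[R]_p) (H : 'M[R]_p).

Definition bil H u w : R := (u *m H *m w^T) 0 0.

Lemma quadformE H u : quadform H u = bil H u u. Proof. by []. Qed.

Lemma bilDl H u1 u2 w : bil H (u1 + u2) w = bil H u1 w + bil H u2 w.
Proof. by rewrite /bil !mulmxDl mxE. Qed.
Lemma bilDr H u w1 w2 : bil H u (w1 + w2) = bil H u w1 + bil H u w2.
Proof. by rewrite /bil linearD /= mulmxDr mxE. Qed.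
Lemma bilZl H (t : R) u w : bil H (t *: u) w = t * bil H u w.
Proof. by rewrite /bil -!scalemxAl mxE. Qed.
Lemma bilZr H (t : R) u w : bil H u (t *: w) = t * bil H u w.
Proof. by rewrite /bil linearZ /= -scalemxAr mxE. Qed.
Lemma bilC H u w : H^T = H -> bil H u w = bil H w u.
Proof.
move=> HT; rewrite /bil.
rewrite -[LHS]/((u *m H *m w^T) 0 0) -[in LHS](trmxK (u *m H *m w^T)) [LHS]mxE.
by rewrite !trmx_mul trmxK HT mulmxA.
Qed.

Lemma sqnorm2E u : sqnorm2 u = (u *m u^T) 0 0.
Proof. by rewrite /sqnorm2 mxE; apply: eq_bigr => i _; rewrite mxE expr2. Qed.

Lemma quadform_scalar H (s : R) u : quadform (H + s%:M) u = quadform H u + s * sqnorm2 u.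
Proof.
rewrite /quadform mulmxDr mulmxDl mxE mul_mx_scalar -scalemxAl; congr (_ + _); by rewrite mxE sqnorm2E.
Qed.

Lemma sqnorm2_ge0 u : 0 <= sqnorm2 u.
Proof. by rewrite /sqnorm2; apply: sumr_ge0 => i _; exact: sqr_ge0. Qed.

Lemma sqnorm2_eq0 u : sqnorm2 u = 0 -> u = 0.
Proof.
move=> /eqP; rewrite /sqnorm2 psumr_eq0; last by move=> i _; exact: sqr_ge0.
move=> /allP H; apply/rowP => i; rewrite mxE.
by have /(_ (mem_index_enum i)) := H i; rewrite implyTb sqrf_eq0 => /eqP.
Qed.

Lemma sqnorm2Z (t : R) u : sqnorm2 (t *: u) = t ^+ 2 * sqnorm2 u.
Proof. by rewrite /sqnorm2 mulr_sumr; apply: eq_bigr => i _; rewrite mxE exprMn. Qed.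

Lemma sqnorm_line u w (h : R) :
  sqnorm2 (h *: u + w) = sqnorm2 w + h * (2 * dotp u w) + h ^+ 2 * sqnorm2 u.
Proof.
rewrite /sqnorm2 /dotp !mulr_sumr -!big_split /=; apply: eq_bigr => i _.
rewrite !mxE; ring.
Qed.

Lemma dotp_unit i w : dotp (@unitvec R p i) w = w 0 i.
Proof.
rewrite /dotp (bigD1 i) //= big1 ?addr0; first by rewrite mxE !eqxx mul1r.
by move=> j /negbTE ji; rewrite mxE ji andbF mul0r.
Qed.

Lemma sqnorm_unit i : sqnorm2 (@unitvec R p i) = 1.
Proof.
rewrite /sqnorm2 (bigD1 i) //= big1 ?addr0; first by rewrite mxE !eqxx expr1n.
by move=> j /negbTE ji; rewrite mxE ji andbF expr0n.
Qed.

Lemma norm2_sq u : norm2 u ^+ 2 = sqnorm2 u.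
Proof. by rewrite /norm2 sqr_sqrtr // sqnorm2_ge0. Qed.

Lemma norm2_ge0 u : 0 <= norm2 u.
Proof. exact: sqrtr_ge0. Qed.
End Alg.

Section S.
Variables (R : realType) (p : nat).
Implicit Types (f : 'rV[R]_p -> R) (x v : 'rV[R]_p).

Lemma quad_derive f x v (a b : R) :
  (forall h : R, f (h *: v + x) = f x + h * a + h ^+ 2 * b) -> is_derive x v f a.
Proof.
move=> E.
have C : (fun h : R => h^-1 *: ((f \o shift x) (h *: v) - f x)) @ 0^' --> a.
  apply: (@cvg_trans _ ((fun h : R => a + h * b) @ 0^')).
  apply: near_eq_cvg.
    near=> h.
    have h0 : h != 0 by near: h; exact: nbhs_dnbhs_neq.
    rewrite /= E.
    have -> : forall u w : R, u *: w = u * w by [].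
    by field.
  apply: (@cvg_trans _ ((fun h : R => a + h * b) @ nbhs (0:R))).
    apply: cvg_app; move=> A /= [e e0 Ae]; exists e => // y ye _; exact: Ae.
  have H : (fun h : R => a + h * b) @ nbhs (0:R) --> a + 0 * b.
    apply: cvgD; first exact: cvg_cst.
    apply: cvgM; [exact: cvg_id | exact: cvg_cst].
  by rewrite mul0r addr0 in H.
apply: DeriveDef; first by apply/cvg_ex; exists a.
exact: cvg_lim C.
Unshelve. all: by end_near. Qed.

Lemma derive_line f x v :
  'D_v f x = 'D_1 (fun h : R => f (h *: v + x)) 0.
Proof.
rewrite /derive; congr (lim (_ @ 0^')); apply/funext => h /=.
by rewrite addr0 scale0r add0r [_%:A]mulr1.
Qed.

Lemma min_deriv0 f x v : (forall y, derivable f y v) -> (forall y, f x <= f y) ->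
  'D_v f x = 0.
Proof.
move=> df fmin; rewrite derive_line.
have H : is_derive (0:R) 1 (fun h : R => f (h *: v + x)) 0.
  apply: (@derive1_at_min R (fun h : R => f (h *: v + x)) (-1) 1 0).
  - by rewrite -subr_ge0 opprK; apply: addr_ge0; exact: ler01.
  - move=> t _; apply/derivable1P.
    have := df (t *: v + x); move/derivable1P.
    suff -> : (fun h : R => f ((h%:A + t) *: v + x)) = (fun h => f (h *: v + (t *: v + x))) by [].
    by apply/funext => h /=; rewrite [_%:A]mulr1 scalerDl addrA.
  - by rewrite in_itv /= oppr_lt0 ltr01.
  - by move=> t _; rewrite scale0r add0r; exact: fmin.
by rewrite derive_val.
Qed.
End S.

Section Cont.
Variables (R : realType) (p : nat).

Lemma cont_sum (I : Type) (r : seq I) (F : I -> 'rV[R]_p -> R) :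
  (forall i, continuous (F i)) -> continuous (fun x => \sum_(i <- r) F i x).
Proof.
move=> Fc; apply: (@continuous_big R I +%R 0 xpredT _ _ r F) => //.
exact: add_continuous.
Qed.

Lemma cont_mul (F G : 'rV[R]_p -> R) :
  continuous F -> continuous G -> continuous (fun x => F x * G x).
Proof. by move=> cF cG x; apply: (cvgM (cF x) (cG x)). Qed.

Lemma cont_coord i : continuous (fun v : 'rV[R]_p => v 0 i).
Proof. exact: coord_continuous. Qed.

Lemma cont_sqnorm2 : continuous (@sqnorm2 R p).
Proof.
rewrite /sqnorm2; apply: cont_sum => i.
have -> : (fun x : 'rV[R]_p => x 0 i ^+ 2) = (fun x => x 0 i * x 0 i).
  by apply/funext => x; rewrite expr2.
by apply: cont_mul; exact: cont_coord.
Qed.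

Lemma cont_quad (H : 'M[R]_p) : continuous (quadform H).
Proof.
have -> : quadform H = (fun u => \sum_(j < p) (\sum_(k < p) u 0 k * H k j) * u 0 j).
  apply/funext => u; rewrite /quadform mxE; apply: eq_bigr => j _.
  by rewrite !mxE.
apply: cont_sum => j; apply: cont_mul; last exact: cont_coord.
apply: cont_sum => k; apply: cont_mul; first exact: cont_coord.
exact: cst_continuous.
Qed.
End Cont.

Section Eig.
Variables (R : realType) (p : nat).

Lemma bil_line (A : 'M[R]_p) v z (t : R) : A^T = A ->
  bil A (v + t *: z) (v + t *: z) = bil A v v + t * (2 * bil A v z) + t ^+ 2 * bil A z z.
Proof.
move=> AT; rewrite !bilDl !bilDr !bilZl !bilZr (bilC _ _ AT).
rewrite [bil A z v](bilC _ _ AT); ring.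
Qed.

Lemma quad_ge_eig (H : 'M[R]_p) Lam : H^T = H -> min_eigenvalue H Lam ->
  forall d, Lam * sqnorm2 d <= quadform H d.
Proof.
move=> HT [_ Lmin] d.
have [->|d0] := eqVneq d 0.
  by rewrite /quadform sqnorm2E !mul0mx !mxE mulr0.
have spos : forall w : 'rV[R]_p, w != 0 -> 0 < sqnorm2 w.
  move=> w w0; rewrite lt_def sqnorm2_ge0 andbT; apply/eqP => /sqnorm2_eq0 w0'.
  by rewrite w0' eqxx in w0.
have inS : forall w : 'rV[R]_p, w != 0 ->
    sqnorm2 ((Num.sqrt (sqnorm2 w))^-1 *: w) = 1.
  move=> w w0; rewrite sqnorm2Z exprVn sqr_sqrtr ?sqnorm2_ge0 // mulVf //.
  by have := spos w w0; rewrite lt0r => /andP[].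
pose S := [set v : 'rV[R]_p | sqnorm2 v = 1].
have S0 : S !=set0 by exists ((Num.sqrt (sqnorm2 d))^-1 *: d); exact: inS.
have cS : compact S.
  apply: (@subclosed_compact _ _ [set v : 'rV[R]_p | forall i, `[-1, 1]%classic (v ord0 i)]).
  - have -> : S = (@sqnorm2 R p) @^-1` [set y : R | y = 1] by [].
    apply: preimage_closed; last exact: closed_eq.
    by move=> x _; exact: cont_sqnorm2.
  - have := (@rV_compact R p (fun=> `[-1, 1]%classic)); apply => _; exact: segment_compact.
  - move=> v /= v1 i; rewrite /= in_itv /=.
    have : v 0 i ^+ 2 <= 1.
      rewrite -v1 /sqnorm2 (bigD1 i) //= lerDl.
      by apply: sumr_ge0 => j _; exact: sqr_ge0.
    move=> h; apply/andP; split; nra.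
have [v0 v0S v0min] := compact_EVT_min S0 cS (continuous_subspaceT (@cont_quad R p H)).
have v01 : sqnorm2 v0 = 1 by move: v0S; rewrite inE.
pose m := quadform H v0.
have Hm : forall w, m * sqnorm2 w <= quadform H w.
  move=> w; have [->|w0] := eqVneq w 0.
    by rewrite /quadform sqnorm2E !mul0mx !mxE !mulr0.
  have := v0min _ (mem_set (inS w w0)).
  rewrite [quadform H (_ *: w)]quadformE bilZl bilZr -quadformE mulrA -expr2.
  rewrite exprVn sqr_sqrtr ?sqnorm2_ge0 // => h.
  have sw := spos w w0.
  have -> : quadform H w = ((sqnorm2 w)^-1 * quadform H w) * sqnorm2 w.
    by rewrite mulrC mulrA mulfV ?mul1r // gt_eqF.
  by rewrite ler_wpM2r // ltW.
pose A := H + (- m)%:M.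
have AT : A^T = A by rewrite /A linearD /= tr_scalar_mx HT.
have qA : forall w, 0 <= bil A w w.
  move=> w; rewrite -quadformE quadform_scalar; have := Hm w; lra.
have qA0 : bil A v0 v0 = 0.
  by rewrite -quadformE quadform_scalar v01 mulr1 /m subrr.
pose z := v0 *m A.
have bz : bil A v0 z = sqnorm2 z by rewrite /bil sqnorm2E.
have Ht : forall t, 0 <= t * (2 * sqnorm2 z) + t ^+ 2 * bil A z z.
  by move=> t; have := qA (v0 + t *: z); rewrite bil_line // qA0 bz add0r.
have z0 : sqnorm2 z = 0.
  set b := sqnorm2 z; set q := bil A z z.
  have b0 : 0 <= b := sqnorm2_ge0 z.
  have q0 : 0 <= q := qA z.
  pose u := (q + 1)^-1.
  have u0 : 0 < u by rewrite invr_gt0; lra.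
  have uq : u * q + u = 1 by rewrite -{2}[u]mulr1 -mulrDr mulVf //; apply/lt0r_neq0; lra.
  have := Ht (- b * u).
  have -> : - b * u * (2 * b) + (- b * u) ^+ 2 * q = b * b * u * (u * q - 2) by ring.
  have -> : u * q - 2 = - (1 + u) by lra.
  move=> h.
  have : b * b * u * (1 + u) <= 0 by nra.
  move=> h2.
  have : b * b <= 0.
    rewrite -(pmulr_lle0 _ (_ : 0 < u * (1 + u))); last by apply: mulr_gt0 => //; lra.
    by rewrite mulrA.
  nra.
have Ev : v0 *m H = m *: v0.
  have := sqnorm2_eq0 z0; rewrite /z /A mulmxDr mul_mx_scalar.
  by move/eqP; rewrite scaleNr addr_eq0 opprK => /eqP.
have eigm : eigenvalue H m.
  apply/eigenvalueP; exists v0 => //; apply/eqP => v00.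
  by move: v01; rewrite v00 /sqnorm2 big1 ?mxE ?expr0n //; [move/eqP; rewrite eq_sym oner_eq0 | move=> i _; rewrite mxE expr0n].
have Lm : Lam <= m by exact: Lmin.
apply: le_trans (Hm d).
by rewrite ler_wpM2r // sqnorm2_ge0.
Qed.
End Eig.

Section Loss.
Variables (R : realType) (p : nat) (X : Type).
Variables (l : 'rV[R]_p -> X -> R) (th0 : 'rV[R]_p).
Hypothesis dl : forall x th v, derivable (fun t => l t x) th v.
Hypothesis dl2 : forall x th i v, derivable (partial i (fun t => l t x)) th v.

Lemma isd_der (f : 'rV[R]_p -> R) th v df : is_derive th v f df -> derivable f th v.
Proof. by case. Qed.

Lemma seqsum_der (T : Type) (r : seq T) (g : T -> 'rV[R]_p -> R) th v :
  (forall x, derivable (g x) th v) ->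
  derivable (fun t => \sum_(x <- r) g x t) th v /\
  'D_v (fun t => \sum_(x <- r) g x t) th = \sum_(x <- r) 'D_v (g x) th.
Proof.
move=> dg; elim: r => [|a r [IH1 IH2]].
  have -> : (fun t => \sum_(x <- [::]) g x t) = cst 0.
    by apply/funext => t; rewrite big_nil.
  by split; [exact: derivable_cst | rewrite derive_cst big_nil].
have -> : (fun t => \sum_(x <- a :: r) g x t) = g a + (fun t => \sum_(x <- r) g x t).
  by apply/funext => t; rewrite big_cons.
split; first exact: derivableD.
by rewrite deriveD // IH2 big_cons.
Qed.

Lemma scale_der (F : 'rV[R]_p -> R) (k : R) th v : derivable F th v ->
  derivable (fun t => k * F t) th v /\ 'D_v (fun t => k * F t) th = k * 'D_v F th.
Proof.
move=> dF; have -> : (fun t => k * F t) = k \*: F by [].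
by split; [exact: derivableZ | rewrite deriveZ].
Qed.

Lemma add_der (F G : 'rV[R]_p -> R) th v : derivable F th v -> derivable G th v ->
  derivable (fun t => F t + G t) th v /\
  'D_v (fun t => F t + G t) th = 'D_v F th + 'D_v G th.
Proof.
move=> dF dG; have -> : (fun t => F t + G t) = F + G by [].
by split; [exact: derivableD | rewrite deriveD].
Qed.

Variable S : seq X.
Let E := emp_loss l S.

Lemma E_der th v : derivable E th v /\
  'D_v E th = (size S)%:R^-1 * \sum_(x <- S) 'D_v (fun t => l t x) th.
Proof.
have [d1 e1] := seqsum_der S (g:=fun x t => l t x) (fun x => @dl x th v).
have [d2 e2] := scale_der (size S)%:R^-1 d1.
by split; [exact: d2 | rewrite /E /emp_loss e2 e1].
Qed.

Lemma Q_der th v : is_derive th v (fun t => sqnorm2 (t - th0)) (2 * dotp v (th - th0)).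
Proof.
apply: quad_derive => h.
by rewrite -addrA sqnorm_line.
Qed.

Lemma G_der j th v : is_derive th v (fun t : 'rV[R]_p => 2 * (t - th0) 0 j) (2 * v 0 j).
Proof.
apply: (@quad_derive _ _ _ _ _ _ 0) => h.
by rewrite !mxE; ring.
Qed.

Variable c : R.
Let L := fun th => E th + c * sqnorm2 (th - th0).

Lemma L_der th v : derivable L th v /\
  'D_v L th = 'D_v E th + c * (2 * dotp v (th - th0)).
Proof.
have dQ := Q_der th v.
have [d1 e1] := scale_der c (isd_der dQ).
have [d2 e2] := add_der (E_der th v).1 d1.
by split; [exact: d2 | rewrite /L e2 e1 derive_val].
Qed.

Lemma grad0 th : is_minimizer L th -> gradient L th = 0.
Proof.
move=> hm; apply/rowP => i; rewrite !mxE /partial.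
apply: min_deriv0 => // y; exact: (L_der y _).1.
Qed.

Lemma hessL th : hessian L th = hessian E th + (2 * c)%:M.
Proof.
apply/matrixP => i j; rewrite !mxE.
have pjL : partial j L = fun t => partial j E t + c * (2 * (t - th0) 0 j).
  by apply/funext => t; rewrite /partial (L_der t _).2 dotp_unit mulrA.
have pjE : partial j E = fun t => (size S)%:R^-1 *
    \sum_(x <- S) partial j (fun t => l t x) t.
  by apply/funext => t; rewrite /partial (E_der t _).2.
have dpjE : forall t, derivable (partial j E) t (@unitvec R p i).
  move=> t; rewrite pjE; apply: (scale_der _ _).1.
  exact: (seqsum_der S (g:=fun x t => partial j (fun t => l t x) t) (fun x => @dl2 x t j (@unitvec R p i))).1.
have dG := G_der j th (@unitvec R p i).
have [d1 e1] := scale_der c (isd_der dG).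
rewrite pjL /partial.
rewrite (add_der (dpjE th) d1).2 e1 derive_val /partial mxE eqxx /=.
case: eqP => [->|/eqP ij]; first by rewrite eqxx mulr1 mulrC.
by rewrite eq_sym (negbTE ij) mulr0 mulr0 mulr0n.
Qed.
End Loss.

Section Data.
Variables (R : realType) (p : nat) (X : Type).
Variables (l : 'rV[R]_p -> X -> R) (th0 : 'rV[R]_p).

Lemma size_emp (s : seq X) t : (size s)%:R * emp_loss l s t = \sum_(x <- s) l t x.
Proof.
rewrite /emp_loss; case: s => [|a s]; first by rewrite big_nil !mulr0.
by rewrite mulrA mulfV ?mul1r // pnatr_eq0.
Qed.

Variables (n : nat) (Dk : 'I_n -> X) (j : 'I_n).

Lemma perm_ds : perm_eq (enum 'I_n) (j :: [seq i <- enum 'I_n | i != j]).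
Proof.
have h := perm_to_rem (mem_enum 'I_n j).
by rewrite rem_filter ?enum_uniq // in h.
Qed.

Lemma perm_ds' : perm_eq (Finite.enum 'I_n) (j :: [seq i <- Finite.enum 'I_n | i != j]).
Proof. by have := perm_ds; rewrite enumT. Qed.

Lemma size_ds : size (dataset Dk) = (size (dataset_minus Dk j)).+1.
Proof. by rewrite /dataset /dataset_minus !size_map ?enumT (perm_size perm_ds'). Qed.

Lemma sum_ds (F : X -> R) : \sum_(x <- dataset Dk) F x = F (Dk j) + \sum_(x <- dataset_minus Dk j) F x.
Proof. by rewrite /dataset /dataset_minus !big_map ?enumT (perm_big _ perm_ds') big_cons. Qed.

Variables (lam g : R).
Lemma key_id t :
  (size (dataset Dk))%:R * reg_emp_loss l th0 lam g (dataset Dk) t =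
  (size (dataset_minus Dk j))%:R * reg_emp_loss l th0 lam g (dataset_minus Dk j) t
  + reg_loss l th0 lam g t (Dk j).
Proof.
rewrite /reg_emp_loss /reg_loss !mulrDr !size_emp sum_ds size_ds -addn1 natrD.
ring.
Qed.
End Data.

Lemma aux_le (R : realType) (s u v r1 r2 : R) : 0 <= s -> u <= v ->
  s * u + r1 - (s * v + r2) <= `|r1 - r2|.
Proof.
move=> s0 uv; apply: le_trans (ler_norm _).
have : s * (u - v) <= 0 by apply: mulr_ge0_le0 => //; rewrite subr_le0.
have -> : s * u + r1 - (s * v + r2) = s * (u - v) + (r1 - r2) by ring.
by move=> h; rewrite -[leRHS]add0r lerD2r.
Qed.

Section PerKJ.
Variables (R : realType) (p : nat) (X : Type).
Variables (l : 'rV[R]_p -> X -> R) (th0 : 'rV[R]_p) (lam : R).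
Hypothesis dl : forall x th v, derivable (fun t => l t x) th v.
Hypothesis dl2 : forall x th i v, derivable (partial i (fun t => l t x)) th v.

Lemma per_kj (n : nat) (Dk : 'I_n -> X) (j : 'I_n) (g Lam eta : R) (th thj : 'rV[R]_p) :
  (0 < n)%N ->
  is_minimizer (reg_emp_loss l th0 lam g (dataset Dk)) th ->
  is_minimizer (reg_emp_loss l th0 lam g (dataset_minus Dk j)) thj ->
  (forall x th th', `|reg_loss l th0 lam g th x - reg_loss l th0 lam g th' x|
       <= eta * norm2 (th - th')) ->
  (let L := reg_emp_loss l th0 lam g (dataset Dk) in
   let d := thj - th in
   L thj = L th + dotp (gradient L th) d + 2^-1 * quadform (hessian L th) d) ->
  min_eigenvalue (hessian (emp_loss l (dataset Dk)) th) Lam ->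
  (hessian (emp_loss l (dataset Dk)) th)^T = hessian (emp_loss l (dataset Dk)) th ->
  0 < Lam + 2 * lam * keep_prob g ->
  n%:R * `|reg_loss l th0 lam g thj (Dk j) - reg_loss l th0 lam g th (Dk j)|
    * (Lam + 2 * lam * keep_prob g) <= 2 * eta ^+ 2.
Proof.
move=> n0 hmin hminj hlip htay heig hsym hmu.
set c := lam * keep_prob g.
set S := dataset Dk; set Sj := dataset_minus Dk j.
set L := reg_emp_loss l th0 lam g S; set Lj := reg_emp_loss l th0 lam g Sj.
set x := Dk j.
set D := reg_loss l th0 lam g thj x - reg_loss l th0 lam g th x.
set N := norm2 (thj - th).
set mu := Lam + 2 * lam * keep_prob g.
have h1 : `|D| <= eta * N := hlip x thj th.
have G0 : gradient L th = 0 := grad0 dl hmin.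
have HL : hessian L th = hessian (emp_loss l S) th + (2 * c)%:M := @hessL _ _ _ l th0 dl dl2 S c th.
have h2 : L thj - L th = 2^-1 * quadform (hessian L th) (thj - th).
  have ht : L thj = L th + dotp (gradient L th) (thj - th) + 2^-1 * quadform (hessian L th) (thj - th) := htay.
  rewrite ht G0 /dotp big1 ?addr0; first by ring.
  by move=> i _; rewrite mxE mul0r.
have h3 : mu * N ^+ 2 <= quadform (hessian L th) (thj - th).
  rewrite HL quadform_scalar norm2_sq.
  have := quad_ge_eig hsym heig (thj - th).
  move=> h; rewrite /mu /c mulrDl [2 * (lam * _)]mulrA.
  exact: lerD h (lexx _).
have sS : (size S)%:R = n%:R :> R by rewrite /S /dataset size_map size_enum_ord.
have h4 : (size S)%:R * (L thj - L th) <= `|D|.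
  rewrite mulrBr !(@key_id _ _ _ l th0 _ Dk j lam g).
  have : Lj thj <= Lj th := hminj th.
  have : 0 <= (size Sj)%:R :> R := ler0n _ _.
  by move=> a b; apply: aux_le.
rewrite sS h2 in h4.
have N0 : 0 <= N := norm2_ge0 _.
have np : 0 < n%:R :> R by rewrite ltr0n.
set a := n%:R * mu / 2.
have a0 : 0 < a by rewrite /a; apply: divr_gt0 => //; exact: mulr_gt0.
have h5 : a * N ^+ 2 <= `|D|.
  apply: le_trans h4; rewrite /a; nra.
have h6 : a * `|D| <= eta ^+ 2.
  have [N00|Np] := eqVneq N 0.
    have : `|D| <= 0 by rewrite N00 mulr0 in h1.
    move=> h; have -> : `|D| = 0 by apply/eqP; rewrite eq_le h normr_ge0.
    by rewrite mulr0 sqr_ge0.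
  have Npos : 0 < N by rewrite lt_def Np N0.
  have aN : a * N <= eta.
    have : a * N * N <= eta * N by rewrite -mulrA -expr2; exact: le_trans h5 h1.
    by rewrite ler_pM2r.
  have e0 : 0 <= eta by apply: le_trans aN; apply: mulr_ge0; [exact: ltW|].
  apply: (le_trans (ler_wpM2l (ltW a0) h1)).
  rewrite mulrCA expr2; apply: ler_wpM2l; [exact: e0 | exact: aN].
have -> : n%:R * `|D| * mu = 2 * (a * `|D|) by rewrite /a; field.
by rewrite ler_pM2l // ltr0n.
Qed.
End PerKJ.

Unset Implicit Arguments.

Lemma cardJ K (n : 'I_K -> nat) : #|{dffun forall k : 'I_K, 'I_(n k)}| = (\prod_(k < K) n k)%N.
Proof. rewrite card_dep_ffun foldrE big_map big_enum /=; apply: eq_bigr => k _; exact: card_ord. Qed.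

Theorem theorem2 (R : realType) (p K : nat) (X : Type)
  (l : 'rV[R]_p -> X -> R) (th0 : 'rV[R]_p) (lam : R) (gam : 'I_K -> R)
  (n : 'I_K -> nat) (D : forall k : 'I_K, 'I_(n k) -> X)
  (thhat : 'I_K -> 'rV[R]_p) (thhatj : forall k : 'I_K, 'I_(n k) -> 'rV[R]_p)
  (eta : R) (Lam : 'I_K -> R) :
  0 < lam ->
  (forall k, 0 <= gam k /\ gam k < 1) ->
  (forall k, (0 < n k)%N) ->
  (* regularity: l(.,x) has (second) directional derivatives *)
  (forall x th v, derivable (fun t => l t x) th v) ->
  (forall x th i v, derivable (partial i (fun t => l t x)) th v) ->
  (* minimizers theta_hat_k and theta_hat_k^j *)
  (forall k, is_minimizer (reg_emp_loss l th0 lam (gam k) (dataset (D k))) (thhat k)) ->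
  (forall k j, is_minimizer
                 (reg_emp_loss l th0 lam (gam k) (dataset_minus (D k) j)) (thhatj k j)) ->
  (* (i) eta-Lipschitz *)
  (forall k x th th',
     `|reg_loss l th0 lam (gam k) th x - reg_loss l th0 lam (gam k) th' x|
       <= eta * norm2 (th - th')) ->
  (* (ii) exact second-order Taylor expansion at theta_hat_k^j *)
  (forall k j,
     let L := reg_emp_loss l th0 lam (gam k) (dataset (D k)) in
     let d := thhatj k j - thhat k in
     L (thhatj k j) = L (thhat k) + dotp (gradient L (thhat k)) d
                      + 2^-1 * quadform (hessian L (thhat k)) d) ->
  (* (iii) PSD regularized Hessian; Lam k = smallest eigenvalue of unregularized one *)
  (forall k, psd (hessian (reg_emp_loss l th0 lam (gam k) (dataset (D k))) (thhat k))) ->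
  (forall k, min_eigenvalue (hessian (emp_loss l (dataset (D k))) (thhat k)) (Lam k)) ->
  (* regularity: the Hessian is symmetric (as for C^2 losses) *)
  (forall k, (hessian (emp_loss l (dataset (D k))) (thhat k))^T
             = hessian (emp_loss l (dataset (D k))) (thhat k)) ->
  (* the bound is finite *)
  (forall k, 0 < Lam k + 2 * lam * keep_prob (gam k)) ->
  unif_expect n (fun j =>
    `| Lprime n (fun k => reg_loss l th0 lam (gam k))
              (fun k => thhatj k (j k)) (fun k => D k (j k))
     - Lprime n (fun k => reg_loss l th0 lam (gam k))
              thhat (fun k => D k (j k)) |)
  <= \sum_(k < K) (2 * eta ^+ 2)
        / ((Lam k + 2 * lam * keep_prob (gam k)) * total_size n).
Proof.
move=> lam0 hg hn dl dl2 hmin hminj hlip htay hpsd heig hsym hmu.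
set T := total_size n.
set B := \sum_(k < K) _.
have Tk : forall k, (n k)%:R <= T.
  move=> k; rewrite /T /total_size (bigD1 k) //= lerDl.
  by apply: sumr_ge0 => i _; exact: ler0n.
have Fj : forall j : {dffun forall k : 'I_K, 'I_(n k)},
    `| Lprime n (fun k => reg_loss l th0 lam (gam k))
              (fun k => thhatj k (j k)) (fun k => D k (j k))
     - Lprime n (fun k => reg_loss l th0 lam (gam k))
              thhat (fun k => D k (j k)) | <= B.
  move=> j; rewrite /Lprime -sumrB; apply: le_trans (ler_norm_sum _ _ _) _.
  apply: ler_sum => k _.
  have nk : 0 < (n k)%:R :> R by rewrite ltr0n.
  have T0 : 0 < T by apply: lt_le_trans (Tk k).
  have hk := @per_kj _ _ _ l th0 lam dl dl2 _ (D k) (j k) (gam k) (Lam k) eta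
     (thhat k) (thhatj k (j k)) (hn k) (hmin k) (hminj k (j k)) (hlip k)
     (htay k (j k)) (heig k) (hsym k) (hmu k).
  rewrite -mulrBr normrM ger0_norm; last by apply: divr_ge0; [exact: ler0n | exact: ltW].
  rewrite mulrAC invfM mulrA ler_wpM2r ?invr_ge0 ?(ltW T0) //.
  by rewrite ler_pdivlMr.
rewrite /unif_expect.
have S : \sum_(j : {dffun forall k : 'I_K, 'I_(n k)}) `| Lprime n (fun k => reg_loss l th0 lam (gam k))
              (fun k => thhatj k (j k)) (fun k => D k (j k))
     - Lprime n (fun k => reg_loss l th0 lam (gam k))
              thhat (fun k => D k (j k)) | <= B *+ #|{dffun forall k : 'I_K, 'I_(n k)}|.
  by rewrite -sumr_const; apply: ler_sum => j _; exact: Fj.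
have P0 : 0 < \prod_(k < K) (n k)%:R :> R.
  by apply: prodr_gt0 => k _; rewrite ltr0n.
apply: le_trans (ler_wpM2l _ S) _; first by rewrite invr_ge0 ltW.
rewrite cardJ -mulr_natr natr_prod mulrC -mulrA mulfV ?mulr1 //.
by apply: lt0r_neq0.
Qed.
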